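(* Let $n \ge 1$ and let $v_1,\dots,v_n > 0$. Consider the tit-for-tat dynamic on players $N=\{1,\dots,n\}$ with values $v_1,\dots,v_n$, started from a non-degenerate configuration: $x_i(0)>0$ for all $i$, and $y_{i,j}(0)>0$ for all $i,j$ with $\sum_{j=1}^n y_{i,j}(0)=1$ for each $i$. Let $v^* = \max_{j\in[n]} v_j$. Then for each player $i$ there exist constants $c_i, d_i > 0$ such that $$c_i \cdot (v_i v^* )^{\lfloor t/2\rfloor} \le x_i(t) \le d_i \cdot (v_i v^* )^{\lfloor t/2\rfloor} \quad \text{for all } t \in \mathbb{N}.$$ In particular, $\lim_{t\to\infty} x_i(t) = \infty$ if $v_i > 1/v^*$, $\lim_{t\to\infty} x_i(t) = 0$ if $v_i < 1/v^*$, and $x_i(t)$ stays in a bounded region (bounded above and bounded away from $0$) for all $t$ if $v_i = 1/v^*$.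
   Context: Tit-for-tat dynamic: there are $n$ players; player $i$ produces good $i$, and each unit of good $j$ used as input by any player yields $v_j$ units of that player's own good. At time $t$, player $i$ holds an amount $x_i(t)$ of good $i$ and allocates it according to fractions $y_{i,j}(t)\ge 0$, $\sum_j y_{i,j}(t)=1$ ($y_{i,j}(t)$ is the fraction of good $i$ given to player $j$). At each time $t$: (Exchange) every player $i$ receives $w_{i,j}(t) = y_{j,i}(t)\, x_j(t)$ units of each good $j$; (Production) $x_i(t+1) = \sum_{j=1}^n v_j\, w_{i,j}(t)$; (Fractions update) $y_{i,j}(t+1) = \dfrac{v_j\, w_{i,j}(t)}{x_i(t+1)}$. *)

(* Defs.v *)
From HB Require Import structures.
From mathcomp Require Import all_boot all_order all_algebra.
From mathcomp Require Import all_classical all_reals all_analysis.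
Set Implicit Arguments. Unset Strict Implicit. Unset Printing Implicit Defensive.
Import Order.TTheory GRing.Theory Num.Theory.
Local Open Scope ring_scope.

(* State of the tit-for-tat dynamic: amounts x i and fractions y i j
   (fraction of good i given to player j). *)
Definition tft_state (R : realType) (n : nat) : Type :=
  (('I_n -> R) * ('I_n -> 'I_n -> R))%type.

Definition tft_step (R : realType) (n : nat) (v : 'I_n -> R)
  (s : tft_state R n) : tft_state R n :=
  let x := s.1 in let y := s.2 in
  (* w i j = y j i * x j : amount of good j received by player i *)
  let w := fun i j => y j i * x j in
  let x' := fun i => \sum_(j < n) v j * w i j in
  (x', fun i j => v j * w i j / x' i).

Fixpoint tft (R : realType) (n : nat) (v : 'I_n -> R)
  (x0 : 'I_n -> R) (y0 : 'I_n -> 'I_n -> R) (t : nat) : tft_state R n :=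
  match t with
  | 0 => (x0, y0)
  | t'.+1 => tft_step v (tft v x0 y0 t')
  end.

Definition tft_x (R : realType) (n : nat) (v : 'I_n -> R)
  (x0 : 'I_n -> R) (y0 : 'I_n -> 'I_n -> R) (t : nat) (i : 'I_n) : R :=
  (tft v x0 y0 t).1 i.

(* v^* = max_j v_j (the default 0 is irrelevant as n >= 1 and v > 0). *)
Definition vmax (R : realType) (n : nat) (v : 'I_n -> R) : R :=
  \big[Num.max/0]_(j < n) v j.

(* Main.v *)
Require Import Defs.
From HB Require Import structures.
From mathcomp Require Import all_boot all_order all_algebra.
From mathcomp Require Import all_classical all_reals all_analysis.
From mathcomp Require Import ring lra.
Import Order.TTheory GRing.Theory Num.Theory.
Set Implicit Arguments. Unset Strict Implicit.
Local Open Scope classical_set_scope.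
Local Open Scope ring_scope.

Lemma powle (R : realType) (a b : R) k : 0 <= a -> a <= b -> a ^+ k <= b ^+ k.
Proof.
move=> a0 ab; elim: k => [|k IH]; first by rewrite !expr0.
rewrite !exprS; apply: ler_pM => //; exact: exprn_ge0.
Qed.

Lemma bern (R : realType) (p : R) k : 1 <= p -> 1 + k%:R * (p - 1) <= p ^+ k.
Proof.
move=> p1; elim: k => [|k IH]; first by rewrite expr0 mul0r addr0.
rewrite exprS.
have h : p * (1 + k%:R * (p - 1)) <= p * p ^+ k by apply: ler_wpM2l => //; lra.
apply: le_trans h.
have : 0 <= k%:R * (p - 1) * (p - 1) :> R.
  by apply: mulr_ge0; [apply: mulr_ge0 => //; lra | lra].
rewrite -natr1; lra.
Qed.

Lemma pow_big (R : realType) (p B : R) : 1 < p ->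
  exists N : nat, forall k, (N <= k)%N -> B <= p ^+ k.
Proof.
move=> p1.
exists (Num.Def.archi_bound (`|B| / (p - 1))) => k Hk.
have h1 := unstable.ltr_norm_bound (`|B| / (p - 1)).
have hp : 0 < p - 1 by lra.
rewrite ger0_norm in h1; last by apply: divr_ge0 => //; lra.
have h2 : (Num.Def.archi_bound (`|B| / (p - 1)))%:R <= k%:R :> R by rewrite ler_nat.
have h3 : `|B| <= k%:R * (p - 1).
  rewrite -ler_pdivrMr //; lra.
have hb := @bern _ p k (ltW p1).
have := ler_norm B; lra.
Qed.

Lemma sum_ge_term (R : realType) n (F : 'I_n -> R) k :
  (forall j, 0 <= F j) -> F k <= \sum_(j < n) F j.
Proof.
move=> H; rewrite (bigD1 k) //=; rewrite lerDl; exact: sumr_ge0.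
Qed.

Fixpoint Z (R : realType) n (v : 'I_n -> R) (x0 : 'I_n -> R) (y0 : 'I_n -> 'I_n -> R)
  (t : nat) (i j : 'I_n) : R :=
  match t with 0 => y0 i j * x0 i | t'.+1 => v j * Z v x0 y0 t' j i end.

Lemma Z_pos (R : realType) n (v : 'I_n -> R) x0 y0 :
  (forall j, 0 < v j) -> (forall i, 0 < x0 i) -> (forall i j, 0 < y0 i j) ->
  forall t i j, 0 < Z v x0 y0 t i j.
Proof.
move=> hv hx hy; elim=> [|t IH] i j /=; first exact: mulr_gt0.
exact: mulr_gt0.
Qed.

Lemma Z2 (R : realType) n (v : 'I_n -> R) x0 y0 k b i j :
  Z v x0 y0 (k.*2 + b) i j = (v i * v j) ^+ k * Z v x0 y0 b i j.
Proof.
elim: k => [|k IH]; first by rewrite expr0 mul1r.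
rewrite doubleS !addSn /= IH exprS; ring.
Qed.

Lemma inv (R : realType) n (v : 'I_n -> R) x0 y0 :
  (0 < n)%N ->
  (forall j, 0 < v j) -> (forall i, 0 < x0 i) -> (forall i j, 0 < y0 i j) ->
  (forall i, \sum_(j < n) y0 i j = 1) ->
  forall t, (forall i, tft_x v x0 y0 t i = \sum_(j < n) Z v x0 y0 t i j) /\
   (forall i j, (tft v x0 y0 t).2 i j * (tft v x0 y0 t).1 i = Z v x0 y0 t i j).
Proof.
move=> n0 hv hx hy hs; elim=> [|t [IH1 IH2]].
  split=> [i|i j] //=; rewrite /tft_x /= -mulr_suml hs mul1r //.
have hx' : forall i, (tft v x0 y0 t.+1).1 i = \sum_(j < n) Z v x0 y0 t.+1 i j.
  move=> i /=; apply: eq_bigr => j _; by rewrite IH2.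
split=> [i|i j]; first exact: hx'.
have pos : (tft v x0 y0 t.+1).1 i != 0.
  rewrite hx'; apply/lt0r_neq0.
  apply: lt_le_trans (sum_ge_term _ _); first exact: (Z_pos hv hx hy t.+1 i i).
  by move=> j'; apply/ltW/Z_pos.
move: pos; rewrite [tft _ _ _ t.+1]/= => pos.
by rewrite divfK // IH2.
Qed.

Theorem theorem1 (R : realType) (n : nat) (v : 'I_n -> R)
  (x0 : 'I_n -> R) (y0 : 'I_n -> 'I_n -> R) :
  (0 < n)%N ->
  (forall j, 0 < v j) ->
  (forall i, 0 < x0 i) ->
  (forall i j, 0 < y0 i j) ->
  (forall i, \sum_(j < n) y0 i j = 1) ->
  forall i : 'I_n,
    (exists c d : R, 0 < c /\ 0 < d /\
       forall t : nat,
         c * (v i * vmax v) ^+ t./2 <= tft_x v x0 y0 t i /\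
         tft_x v x0 y0 t i <= d * (v i * vmax v) ^+ t./2) /\
    (v i > (vmax v)^-1 -> (fun t => tft_x v x0 y0 t i) @ \oo --> +oo) /\
    (v i < (vmax v)^-1 -> (fun t => tft_x v x0 y0 t i) @ \oo --> 0) /\
    (v i = (vmax v)^-1 -> exists m M : R, 0 < m /\ 0 < M /\
       forall t : nat, m <= tft_x v x0 y0 t i <= M).
Proof.
move=> n0 hv hx hy hs i.
have Zp := Z_pos hv hx hy.
have xE : forall t, tft_x v x0 y0 t i =
    \sum_(j < n) (v i * v j) ^+ t./2 * Z v x0 y0 (odd t) i j.
  move=> t; rewrite (proj1 (inv n0 hv hx hy hs t)).
  apply: eq_bigr => j _; by rewrite -Z2 addnC odd_double_half.
have [jm _ vmE] : {i0 : 'I_n | i0 \in predT & vmax v = v i0}.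
  rewrite /vmax; apply: (eq_bigmax i) => // k _; exact: ltW.
have vle : forall j, v j <= vmax v by move=> j; rewrite /vmax; exact: le_bigmax.
have vm0 : 0 < vmax v by rewrite vmE.
set q := v i * vmax v.
have q0 : 0 < q by apply: mulr_gt0.
pose c := Num.min (Z v x0 y0 0 i jm) (Z v x0 y0 1 i jm).
pose d := \sum_(j < n) Z v x0 y0 0 i j + \sum_(j < n) Z v x0 y0 1 i j.
have c0 : 0 < c by rewrite lt_min !Zp.
have S0 : forall b : bool, 0 < \sum_(j < n) Z v x0 y0 b i j.
  move=> b; apply: lt_le_trans (@sum_ge_term _ _ _ i _); first exact: Zp.
  by move=> j; apply/ltW.
have d0 : 0 < d by apply: addr_gt0; [exact: (S0 false) | exact: (S0 true)].
have bnd : forall t, c * q ^+ t./2 <= tft_x v x0 y0 t i <= d * q ^+ t./2.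
  move=> t; rewrite xE; apply/andP; split.
    apply: le_trans (@sum_ge_term _ _ _ jm _); last first.
      by move=> j; apply: mulr_ge0; [apply: exprn_ge0; apply/ltW/mulr_gt0|apply/ltW].
    rewrite mulrC /q vmE; apply: ler_wpM2l; first by apply: exprn_ge0; apply/ltW/mulr_gt0.
    by case: (odd t); rewrite /c ?ge_min lexx ?orbT.
  apply: (@le_trans _ _ (\sum_(j < n) q ^+ t./2 * Z v x0 y0 (odd t) i j)).
    apply: ler_sum => j _; apply: ler_wpM2r; first exact/ltW.
    by apply: powle; [apply/ltW/mulr_gt0|apply: ler_wpM2l; [apply/ltW|]].
  rewrite -mulr_sumr mulrC; apply: ler_wpM2r; first exact: exprn_ge0 (ltW q0).
  rewrite /d; case: (odd t).
    by rewrite lerDr; apply/ltW/(S0 false).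
  by rewrite lerDl; apply/ltW/(S0 true).
split; first by exists c, d; split=> //; split=> // t; apply/andP/bnd.
split.
  move=> hgt; have q1 : 1 < q by rewrite /q -(mulVf (lt0r_neq0 vm0)) ltr_pM2r.
  apply/cvgryPge => A.
  have [N HN] := pow_big (A / c) q1.
  apply: filterS (nbhs_infty_ge (N.*2)) => t Ht.
  have HtN : (N <= t./2)%N by rewrite -(half_double N) half_leq.
  have := HN _ HtN; rewrite ler_pdivrMr // => h.
  apply: le_trans (proj1 (andP (bnd t))); by rewrite mulrC.
split.
  move=> hlt; have q1 : 1 < q^-1.
    by rewrite invf_gt1 //; rewrite /q -(mulVf (lt0r_neq0 vm0)) ltr_pM2r.
  apply/cvgr0Pnorm_le => e e0.
  have [N HN] := pow_big (d / e) q1.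
  apply: filterS (nbhs_infty_ge (N.*2)) => t Ht.
  have HtN : (N <= t./2)%N by rewrite -(half_double N) half_leq.
  have := HN _ HtN; rewrite exprVn ler_pdivrMr // => h.
  have xp : 0 < tft_x v x0 y0 t i.
    apply: lt_le_trans (proj1 (andP (bnd t))); apply: mulr_gt0 => //; exact: exprn_gt0.
  rewrite gtr0_norm //; apply: le_trans (proj2 (andP (bnd t))) _.
  have qk : 0 < q ^+ t./2 by exact: exprn_gt0.
  apply: (le_trans (ler_wpM2r (ltW qk) h)).
  by rewrite mulrAC mulVf ?mul1r // lt0r_neq0.
move=> heq; have q1 : q = 1 by rewrite /q heq mulVf // lt0r_neq0.
exists c, d; split=> //; split=> // t.
by have := bnd t; rewrite q1 expr1n !mulr1.
Qed.
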